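(* In the setting described in the context, let $(u_1,\dots,u_n)\in C(U,W,\alpha)$ and set $\alpha_0=p_1-1$. Then: (1) for $i\in[n]$ and $j\in[0,i]$, $u_i([a,\alpha_j])\subseteq[a,j]$; (2) for every $i\in[n]$, $u_i^{-1}(i)\ge p_i$; (3) for every $i\in[n]$, $u_1^{-1}(i)=u_2^{-1}(i)=\cdots=u_i^{-1}(i)$.
   Context: Permutations: for integers $a\le n$, $S_{[a,n]}$ is the set of bijections of $\mathbb Z$ fixing every integer outside $[a,n]$, one-line notation $[w(a),\dots,w(n)]$; $\tau_{i,j}$ swaps $i<j$, $u\tau_{i,j}=u\circ\tau_{i,j}$; $\ell(u)$ = number of inversions; $u\lessdot_k u\tau_{i,j}$ if $i\le k<j$ and $\ell(u\tau_{i,j})=\ell(u)+1$; $u\xrightarrow{k}w$ if there is a chain $u=v_1\lessdot_k\cdots\lessdot_k v_s=w$ ($s\ge1$), $v_{t+1}=v_t\tau_{i_t,j_t}$, with $v_1(i_1)<\cdots<v_{s-1}(i_{s-1})$. For $\beta=(\beta_1,\dots,\beta_m)$, $C(u,w,\beta)$ is the set of $(v_1,\dots,v_{m+1})$ with $v_1=u$, $v_{m+1}=w$, $v_i\xrightarrow{\beta_i}v_{i+1}$. Setting: fix $a\le0<n$ and $A=\{(r,c):1\le r\le n,\ a\le c\le r\}$. Let $\gamma=(\gamma_N,\gamma_E,\gamma_S,\gamma_W)$ be a boundary condition of $A$: $\gamma_N(c)$ ($c\in[a,n]$) is the label of the pipe entering through the top edge of the top cell $(\max(c,1),c)$ of column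 $c$ or $\varnothing$; $\gamma_E(r)$ that of the pipe entering through the right edge of $(r,r)$ or $\varnothing$; $\gamma_S(c)$ that of the pipe exiting through the bottom edge of $(n,c)$ or $\varnothing$; $\gamma_W(r)$ that of the pipe exiting through the left edge of $(r,a)$ or $\varnothing$. Assume $\gamma_S(c)\ne\varnothing$ for $c\in[a,n]$, $\gamma_W(r)=\varnothing$ and $\gamma_N(r)\ne\varnothing$ for $r\in[n]$, and the non-$\varnothing$ values of $\gamma_N,\gamma_E$ are exactly $a,\dots,n$, increasing along the order: top edges of columns $a,\dots,1$, right edge of row 1, top edge of column 2, right edge of row 2, …, top edge of column $n$, right edge of row $n$ (the values of $\gamma_S$ are then also exactly $a,\dots,n$). Put $p_c=\gamma_N(c)$ ($c\in[n]$), $\alpha_i=p_{i+1}-1$ for $i\in[n-1]$, $\alpha=(\alpha_1,\dots,\alpha_{n-1})$. $P_r=\{w\in S_{[a,n]}:w(p_j)=j\ \forall j\in(r,n]\}$; $\iota_r:P_r\to S_{[a,r]}$ deletes the values $r+1,\dots,n$ from one-line notation. $W\in P_1$: $\iota_1(W)(\ell)=\gamma_N^{-1}(\ell)$ for $\ell\in[a,p_1]$ and $\iota_1(W)$ decreasing on $(p_1,1]$. $U\in S_{[a,n]}$: $U(\ell)=\gamma_S^{-1}(\ell)$ for $\ell\in[a,n]$. *)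

(* Defs.v *)
From Stdlib Require Import ZArith List Sorting.Sorted Bool.
Import ListNotations.
Open Scope Z_scope.

Definition zrange (lo hi : Z) : list Z :=
  map (fun k => lo + Z.of_nat k) (seq 0 (Z.to_nat (hi - lo + 1))).

Definition fixes_outside (lo hi : Z) (u : Z -> Z) : Prop :=
  forall x, x < lo \/ hi < x -> u x = x.

Definition is_bij (u : Z -> Z) : Prop :=
  (forall x y, u x = u y -> x = y) /\ (forall y, exists x, u x = y).

Definition Sperm (lo hi : Z) (u : Z -> Z) : Prop :=
  is_bij u /\ fixes_outside lo hi u.

Definition inv_window (lo hi : Z) (u : Z -> Z) : nat :=
  length (filter (fun p => (fst p <? snd p) && (u (snd p) <? u (fst p)))
                 (list_prod (zrange lo hi) (zrange lo hi))).

(* ell(u) = L : the (finite) number of inversions of the finitary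
   permutation u is L; computed on any window containing the support
   (all inversions lie in such a window). *)
Definition has_length (u : Z -> Z) (L : nat) : Prop :=
  exists lo hi, fixes_outside lo hi u /\ L = inv_window lo hi u.

Definition tau (i j : Z) (x : Z) : Z :=
  if x =? i then j else if x =? j then i else x.

Definition rtau (u : Z -> Z) (i j : Z) : Z -> Z := fun x => u (tau i j x).

Definition kcover (k : Z) (u : Z -> Z) (i j : Z) : Prop :=
  i <= k < j /\ exists L, has_length u L /\ has_length (rtau u i j) (S L).

(* v = v_1 <._k v_2 <._k ... <._k v_s = w, with v_{t+1} = v_t tau_{i_t,j_t},
   where ts = [(i_1,j_1); ...; (i_{s-1},j_{s-1})] *)
Fixpoint kpath (k : Z) (v : Z -> Z) (ts : list (Z * Z)) (w : Z -> Z) : Prop :=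
  match ts with
  | nil => v = w
  | (i, j) :: ts' => kcover k v i j /\ kpath k (rtau v i j) ts' w
  end.

Fixpoint path_vals (v : Z -> Z) (ts : list (Z * Z)) : list Z :=
  match ts with
  | nil => nil
  | (i, j) :: ts' => v i :: path_vals (rtau v i j) ts'
  end.

Definition karrow (k : Z) (u w : Z -> Z) : Prop :=
  exists ts, kpath k u ts w /\ Sorted Z.lt (path_vals u ts).

(* (v 1, ..., v (m+1)) \in C(u, w, beta) with beta = (beta 1, ..., beta m) *)
Definition inC (m : Z) (beta : Z -> Z) (u w : Z -> Z) (v : Z -> Z -> Z) : Prop :=
  v 1 = u /\ v (m + 1) = w /\
  forall i, 1 <= i <= m -> karrow (beta i) (v i) (v (i + 1)).

(* the boundary labels of gamma_N, gamma_E in the order: top edges of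
   columns a..1, right edge of row 1, top of column 2, right of row 2, ...,
   top of column n, right edge of row n *)
Definition boundary_seq (a n : Z) (gN gE : Z -> option Z) : list (option Z) :=
  map gN (zrange a 1) ++
  flat_map (fun r => [gE r; gN (r + 1)]) (zrange 1 (n - 1)) ++ [gE n].

Definition somes (l : list (option Z)) : list Z :=
  flat_map (fun o => match o with Some v => [v] | None => [] end) l.

(* iota_r : P_r -> S_[a,r]: delete the values r+1..n from the one-line
   notation [w(a),...,w(n)] and read the result as one-line notation *)
Definition iota_r (a n r : Z) (w : Z -> Z) : Z -> Z := fun k =>
  if (a <=? k) && (k <=? r) then
    nth (Z.to_nat (k - a)) (filter (fun v => v <=? r) (map w (zrange a n))) k
  else k.

(* Main.v *)
Require Import Defs.
From Stdlib Require Import ZArith List Lia Sorting.Sorted Bool FunctionalExtensionality FinFun.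
Import ListNotations.
Open Scope Z_scope.

Lemma in_zrange lo hi x : In x (zrange lo hi) <-> lo <= x <= hi.
Proof.
  unfold zrange. rewrite in_map_iff. split.
  - intros [k [Hk Hin]]. apply in_seq in Hin. lia.
  - intros H. exists (Z.to_nat (x - lo)). split. lia. apply in_seq. lia.
Qed.

Lemma NoDup_zrange lo hi : NoDup (zrange lo hi).
Proof. unfold zrange. apply Injective_map_NoDup. intros x y H; lia. apply seq_NoDup. Qed.

Lemma NoDup_prod {A B} (l1 : list A) (l2 : list B) : NoDup l1 -> NoDup l2 -> NoDup (list_prod l1 l2).
Proof.
  intros H1 H2. induction H1 as [|a l1 Ha H1 IH]; simpl. constructor.
  apply NoDup_app; auto.
  - apply Injective_map_NoDup; auto. intros x y E; now inversion E.
  - intros [x y] Hin Hin2. apply in_map_iff in Hin. destruct Hin as [z [E _]]. inversion E; subst.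
    apply in_prod_iff in Hin2. tauto.
Qed.

Definition invf (u : Z -> Z) := fun p : Z*Z => (fst p <? snd p) && (u (snd p) <? u (fst p)).

Lemma inv_eq lo hi u : inv_window lo hi u = length (filter (invf u) (list_prod (zrange lo hi) (zrange lo hi))).
Proof. reflexivity. Qed.

Lemma inv_mem lo hi u p q : In (p,q) (filter (invf u) (list_prod (zrange lo hi) (zrange lo hi))) <-> (lo <= p <= hi /\ lo <= q <= hi /\ p < q /\ u q < u p).
Proof. rewrite filter_In, in_prod_iff, !in_zrange. unfold invf; simpl. rewrite andb_true_iff, !Z.ltb_lt. tauto. Qed.

Lemma inv_nodup lo hi u : NoDup (filter (invf u) (list_prod (zrange lo hi) (zrange lo hi))).
Proof. apply NoDup_filter, NoDup_prod; apply NoDup_zrange. Qed.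

Lemma len_eq {A} (l1 l2 : list A) : NoDup l1 -> NoDup l2 -> (forall x, In x l1 <-> In x l2) -> length l1 = length l2.
Proof. intros. apply Nat.le_antisymm; apply NoDup_incl_length; auto; intros x; apply H1. Qed.

Lemma tri lo hi u z : is_bij u -> fixes_outside lo hi u ->
  (z < lo /\ u z = z) \/ (lo <= z <= hi /\ lo <= u z <= hi) \/ (hi < z /\ u z = z).
Proof.
  intros [Hi _] Hf.
  destruct (Z_lt_le_dec z lo). left. split. lia. apply Hf; lia.
  destruct (Z_lt_le_dec hi z). right; right. split. lia. apply Hf; lia.
  right; left. split. lia.
  destruct (Z_lt_le_dec (u z) lo) as [H|H].
  - assert (u (u z) = u z) by (apply Hf; lia). apply Hi in H0. lia.
  - destruct (Z_lt_le_dec hi (u z)). assert (u (u z) = u z) by (apply Hf; lia). apply Hi in H0. lia. lia.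
Qed.

Lemma inv_ext lo hi lo' hi' u : is_bij u -> fixes_outside lo hi u -> lo' <= lo -> hi <= hi' ->
  inv_window lo hi u = inv_window lo' hi' u.
Proof.
  intros Hb Hf H1 H2. rewrite !inv_eq. apply len_eq; try apply inv_nodup.
  intros [p q]. rewrite !inv_mem. split. intros; lia.
  intros (Hp & Hq & Hpq & Hu).
  destruct (tri _ _ _ p Hb Hf) as [[? E]|[[? ?]|[? E]]];
  destruct (tri _ _ _ q Hb Hf) as [[? E']|[[? ?]|[? E']]]; try rewrite ?E, ?E' in *; lia.
Qed.

Ltac crush :=
  unfold tau in *;
  repeat match goal with
  | H : (_,_) = (_,_) |- _ => injection H; clear H; intros
  | |- context [?a =? ?b] => destruct (Z.eqb_spec a b)
  | H : context [?a =? ?b] |- _ => destruct (Z.eqb_spec a b)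
  | |- context [?a <? ?b] => destruct (Z.ltb_spec a b)
  | H : context [?a <? ?b] |- _ => destruct (Z.ltb_spec a b)
  end; subst; try lia; try reflexivity.

Definition gmap x y (pq : Z*Z) := let (p,q) := pq in
  if tau x y p <? tau x y q then (tau x y p, tau x y q) else (p,q).

Lemma inv_incr lo hi u x y : fixes_outside lo hi u -> lo <= x -> x < y -> y <= hi -> u x < u y ->
  (inv_window lo hi u < inv_window lo hi (rtau u x y))%nat.
Proof.
  intros Hf Hx Hxy Hy Hu. rewrite !inv_eq.
  assert (Hle: (length ((x,y) :: map (gmap x y) (filter (invf u) (list_prod (zrange lo hi) (zrange lo hi))))
     <= length (filter (invf (rtau u x y)) (list_prod (zrange lo hi) (zrange lo hi))))%nat).
  { apply NoDup_incl_length.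
    - constructor.
      + intros Hin. apply in_map_iff in Hin. destruct Hin as [[p q] [Hg Hin]]. rewrite inv_mem in Hin.
        unfold gmap in Hg. crush.
      + apply NoDup_map_NoDup_ForallPairs; [|apply inv_nodup].
        intros [p1 q1] [p2 q2] I1 I2 Hg. rewrite inv_mem in I1, I2. unfold gmap in Hg. crush.
    - intros [p q] Hin. rewrite inv_mem. unfold rtau. destruct Hin as [E|Hin].
      + inversion E; subst. crush.
      + apply in_map_iff in Hin. destruct Hin as [[p' q'] [Hg Hin]]. rewrite inv_mem in Hin.
        unfold gmap in Hg. crush. }
  simpl in Hle. rewrite length_map in Hle. lia.
Qed.

Lemma rtau_rtau v x y : rtau (rtau v x y) x y = v.
Proof. apply functional_extensionality; intro z. unfold rtau. f_equal. crush. Qed.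

Lemma bij_rtau v x y : is_bij v -> is_bij (rtau v x y).
Proof.
  intros [Hi Hs]. split.
  - intros a b E. unfold rtau in E. apply Hi in E. crush.
  - intros z. destruct (Hs z) as [w Hw]. exists (tau x y w). unfold rtau.
    rewrite <- Hw. f_equal. crush.
Qed.

Lemma fixes_mono lo hi lo' hi' u : fixes_outside lo hi u -> lo' <= lo -> hi <= hi' -> fixes_outside lo' hi' u.
Proof. intros F ? ? z Hz. apply F. lia. Qed.

Lemma cover_lt k v x y : is_bij v -> kcover k v x y -> x <= k < y /\ v x < v y.
Proof.
  intros Hb [Hk [L [[lo1 [hi1 [F1 E1]]] [lo2 [hi2 [F2 E2]]]]]].
  split. lia.
  destruct (Z.lt_trichotomy (v x) (v y)) as [|[E|]]; auto.
  - apply (proj1 Hb) in E; lia.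
  - exfalso.
    set (lo := Z.min (Z.min lo1 lo2) x). set (hi := Z.max (Z.max hi1 hi2) y).
    set (w := rtau v x y).
    assert (Bw : is_bij w) by (apply bij_rtau; auto).
    assert (Fw : fixes_outside lo hi w) by (apply (fixes_mono lo2 hi2); auto; lia).
    assert (Fv : fixes_outside lo hi v) by (apply (fixes_mono lo1 hi1); auto; lia).
    assert (E3 : L = inv_window lo hi v) by (rewrite E1; apply inv_ext; auto; lia).
    assert (E4 : S L = inv_window lo hi w) by (rewrite E2; apply inv_ext; auto; lia).
    assert (Hw : w x < w y) by (unfold w, rtau; crush).
    pose proof (inv_incr lo hi w x y Fw ltac:(lia) ltac:(lia) ltac:(lia) Hw) as I.
    unfold w in I at 2. rewrite rtau_rtau in I. fold w in I. lia.
Qed.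

Definition InvA (a : Z) (v : Z -> Z) (M j : Z) := forall x, a <= x <= M -> v x <= j.

Lemma step_back a n k v x y : Sperm a n (rtau v x y) -> kcover k v x y ->
  Sperm a n v /\ a <= x /\ y <= n /\ x <= k < y /\ v x < v y.
Proof.
  intros [Bw Fw] Hc.
  assert (Bv : is_bij v) by (rewrite <- (rtau_rtau v x y); apply bij_rtau; auto).
  destruct (cover_lt _ _ _ _ Bv Hc) as [Hk Hl].
  set (w := rtau v x y) in *.
  assert (Wx : w x = v y) by (unfold w, rtau; crush).
  assert (Wy : w y = v x) by (unfold w, rtau; crush).
  assert (R: a <= x /\ y <= n).
  { destruct (tri _ _ _ x Bw Fw) as [[? E]|[[? ?]|[? E]]];
    destruct (tri _ _ _ y Bw Fw) as [[? E']|[[? ?]|[? E']]]; lia. }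
  split; [|lia]. split; auto.
  intros z Hz. rewrite <- (rtau_rtau v x y). fold w. unfold rtau.
  assert (T: tau x y z = z) by crush. rewrite T. apply Fw; auto.
Qed.

Lemma kpath_back a n k ts : forall v w, kpath k v ts w -> Sperm a n w ->
  Sperm a n v /\ (forall M j, M <= k -> InvA a w M j -> InvA a v M j) /\
  (forall j, InvA a w k j -> forall x i, j < i -> (v x = i <-> w x = i)).
Proof.
  induction ts as [|[x0 y0] ts IH]; intros v w Hp Hw; simpl in Hp.
  - subst. split; auto. split; auto. tauto.
  - destruct Hp as [Hc Hp]. destruct (IH _ _ Hp Hw) as [S1 [I1 V1]].
    destruct (step_back _ _ _ _ _ _ S1 Hc) as [S0 [Ha [Hn [Hk Hl]]]].
    assert (IS: forall M j, M <= k -> InvA a (rtau v x0 y0) M j -> InvA a v M j).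
    { intros M j HM HI z Hz. destruct (Z.eq_dec z x0).
      - subst. specialize (HI x0 Hz). unfold rtau, tau in HI. rewrite Z.eqb_refl in HI. lia.
      - assert (z <> y0) by lia. specialize (HI z Hz). unfold rtau in HI.
        replace (tau x0 y0 z) with z in HI by crush. auto. }
    split; auto. split.
    + intros M j HM HI. apply (IS M); auto.
    + intros j Hj x i Hi. rewrite <- (V1 j Hj x i Hi).
      assert (J1: InvA a (rtau v x0 y0) k j) by (apply I1; auto; lia).
      assert (J0 := IS k j (Z.le_refl _) J1).
      assert (vx0 : v x0 <= j) by (apply J0; lia).
      assert (vy0 : v y0 <= j).
      { specialize (J1 x0 ltac:(lia)). unfold rtau, tau in J1. rewrite Z.eqb_refl in J1. auto. }
      unfold rtau, tau. destruct (Z.eqb_spec x x0); destruct (Z.eqb_spec x y0); subst; split; intros; lia.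
Qed.

Lemma zrange_nil lo hi : hi < lo -> zrange lo hi = [].
Proof. intros. unfold zrange. replace (Z.to_nat (hi - lo + 1)) with 0%nat by lia. reflexivity. Qed.

Lemma zrange_cons lo hi : lo <= hi -> zrange lo hi = lo :: zrange (lo+1) hi.
Proof.
  intros. unfold zrange. replace (Z.to_nat (hi-lo+1)) with (S (Z.to_nat (hi - (lo+1) + 1))) by lia.
  simpl. rewrite <- seq_shift, map_map. f_equal. lia. apply map_ext; intros; lia.
Qed.

Lemma zrange_app lo hi m : lo <= m -> m <= hi + 1 -> zrange lo hi = zrange lo (m-1) ++ zrange m hi.
Proof.
  remember (Z.to_nat (m - lo)) as d. revert lo Heqd.
  induction d; intros lo Hd H1 H2.
  - replace m with lo by lia. rewrite (zrange_nil lo (lo-1)) by lia. reflexivity.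
  - rewrite (zrange_cons lo hi) by lia. rewrite (zrange_cons lo (m-1)) by lia.
    simpl. f_equal. apply IHd; lia.
Qed.

Lemma length_zrange lo hi : length (zrange lo hi) = Z.to_nat (hi - lo + 1).
Proof. unfold zrange. now rewrite length_map, length_seq. Qed.

Lemma nth_map_any {A B} (f : A -> B) l k d d0 : (k < length l)%nat -> nth k (map f l) d = f (nth k l d0).
Proof. intros. rewrite nth_indep with (d' := f d0). apply map_nth. rewrite length_map; auto. Qed.

Lemma nth_zrange lo hi k d : (k < Z.to_nat (hi-lo+1))%nat -> nth k (zrange lo hi) d = lo + Z.of_nat k.
Proof.
  intros. unfold zrange. rewrite (nth_map_any _ _ _ _ 0%nat). rewrite seq_nth; auto.
  rewrite length_seq; auto.
Qed.

Lemma zrange_lt lo hi s t r x y : zrange lo hi = s ++ x :: t ++ y :: r -> x < y.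
Proof.
  intros E.
  assert (Len := length_zrange lo hi). rewrite E in Len.
  rewrite length_app in Len. simpl in Len. rewrite length_app in Len. simpl in Len.
  assert (Lx : nth (length s) (zrange lo hi) 0 = x).
  { rewrite E, app_nth2, Nat.sub_diag by lia. reflexivity. }
  assert (Ly : nth (length s + S (length t)) (zrange lo hi) 0 = y).
  { rewrite E, app_nth2 by lia. replace (length s + S (length t) - length s)%nat with (S (length t)) by lia.
    simpl. rewrite app_nth2, Nat.sub_diag by lia. reflexivity. }
  rewrite nth_zrange in Lx, Ly by lia. lia.
Qed.

Lemma bseq_decomp a n gN gE c : a <= 0 -> 1 <= c <= n-1 ->
  exists l1 l3, boundary_seq a n gN gE = l1 ++ gN c :: gE c :: gN (c+1) :: l3.
Proof.
  intros Ha Hc. unfold boundary_seq.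
  destruct (Z.eq_dec c 1).
  - subst c. rewrite (zrange_app a 1 1) by lia. rewrite (zrange_cons 1 1) by lia.
    rewrite (zrange_nil (1+1) 1) by lia. rewrite (zrange_cons 1 (n-1)) by lia.
    exists (map gN (zrange a (1-1))), (flat_map (fun r => [gE r; gN (r + 1)]) (zrange (1+1) (n-1)) ++ [gE n]).
    rewrite map_app. simpl. rewrite <- !app_assoc. reflexivity.
  - rewrite (zrange_app 1 (n-1) (c-1)) by lia. rewrite (zrange_cons (c-1) (n-1)) by lia.
    replace (c-1+1) with c by lia. rewrite (zrange_cons c (n-1)) by lia. rewrite flat_map_app. simpl.
    replace (c-1+1) with c by lia.
    exists (map gN (zrange a 1) ++ flat_map (fun r => [gE r; gN (r + 1)]) (zrange 1 (c-1-1)) ++ [gE (c-1)]),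
      (flat_map (fun r => [gE r; gN (r + 1)]) (zrange (c+1) (n-1)) ++ [gE n]).
    rewrite <- !app_assoc. reflexivity.
Qed.

Lemma somes_split l1 x o y l3 : somes (l1 ++ Some x :: o :: Some y :: l3) = somes l1 ++ x :: somes [o] ++ y :: somes l3.
Proof. unfold somes. rewrite flat_map_app. simpl. destruct o; reflexivity. Qed.

Lemma somes_in l v : In (Some v) l -> In v (somes l).
Proof. intros. unfold somes. apply in_flat_map. exists (Some v). simpl; auto. Qed.

Lemma bseq_in a n gN gE c : a <= 0 -> 1 <= c <= n -> In (gN c) (boundary_seq a n gN gE).
Proof.
  intros Ha Hc. unfold boundary_seq. apply in_or_app.
  destruct (Z.eq_dec c 1).
  - left. subst. apply in_map. apply in_zrange. lia.
  - right. apply in_or_app. left. apply in_flat_map. exists (c-1). split. apply in_zrange; lia.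
    simpl. right. left. f_equal. lia.
Qed.

Lemma filter_true_in {A} (f : A -> bool) l : (forall z, In z l -> f z = true) -> filter f l = l.
Proof. induction l; simpl; intros H; auto. rewrite H by auto. f_equal. apply IHl; auto. Qed.

Lemma iota_prefix a n W x : a <= x <= 1 -> x <= n -> (forall y, a <= y <= x -> W y <= 1) ->
  iota_r a n 1 W x = W x.
Proof.
  intros H1 H2 H3. unfold iota_r.
  replace ((a <=? x) && (x <=? 1)) with true by (symmetry; apply andb_true_iff; split; apply Z.leb_le; lia).
  rewrite (zrange_app a n (x+1)) by lia. replace (x+1-1) with x by lia. rewrite map_app, filter_app.
  rewrite filter_true_in.
  2:{ intros z Hz. apply in_map_iff in Hz. destruct Hz as [y [<- Hy]]. apply in_zrange in Hy.
      apply Z.leb_le. apply H3; lia. }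
  rewrite app_nth1. 2:{ rewrite length_map, length_zrange. lia. }
  rewrite (nth_map_any _ _ _ _ 0). 2:{ rewrite length_zrange. lia. }
  rewrite nth_zrange by lia. f_equal. lia.
Qed.

Theorem lemma4p28
  (a n : Z) (gN gE gS gW : Z -> option Z) (p : Z -> Z)
  (U W : Z -> Z) (u : Z -> Z -> Z)
  (ha : a <= 0) (hn : 0 < n)
  (* boundary condition gamma *)
  (hS : forall c, a <= c <= n -> gS c <> None)
  (hW : forall r, 1 <= r <= n -> gW r = None)
  (hN : forall r, 1 <= r <= n -> gN r <> None)
  (hNE : somes (boundary_seq a n gN gE) = zrange a n)
  (* p_c = gamma_N(c) *)
  (hp : forall c, 1 <= c <= n -> gN c = Some (p c))
  (* W in P_1 with the prescribed iota_1(W) *)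
  (hWperm : Sperm a n W)
  (hWP : forall j, 1 < j <= n -> W (p j) = j)
  (hW1 : forall l, a <= l <= p 1 -> gN (iota_r a n 1 W l) = Some l)
  (hW2 : forall x y, p 1 < x -> x < y -> y <= 1 ->
           iota_r a n 1 W y < iota_r a n 1 W x)
  (* U(l) = gamma_S^{-1}(l) *)
  (hUperm : Sperm a n U)
  (hU : forall l, a <= l <= n -> gS (U l) = Some l)
  (* (u_1, ..., u_n) in C(U, W, alpha), alpha_i = p_{i+1} - 1 *)
  (hC : inC (n - 1) (fun i => p (i + 1) - 1) U W u) :
  (* (1), with alpha_j = p_{j+1} - 1 (alpha_0 = p_1 - 1) *)
  (forall i j x, 1 <= i <= n -> 0 <= j <= i -> j <= n - 1 ->
     a <= x <= p (j + 1) - 1 -> a <= u i x <= j) /\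
  (* (2) *)
  (forall i x, 1 <= i <= n -> u i x = i -> p i <= x) /\
  (* (3) *)
  (forall i k x, 1 <= k <= i -> i <= n -> (u k x = i <-> u 1 x = i)).
Proof.
  assert (p_adj : forall c, 1 <= c <= n-1 -> p c < p (c+1)).
  { intros c Hc. destruct (bseq_decomp a n gN gE c ha Hc) as [l1 [l3 E]].
    rewrite E, (hp c), (hp (c+1)) in hNE by lia. rewrite somes_split in hNE.
    symmetry in hNE. eapply zrange_lt; eauto. }
  assert (p_mono0 : forall k : nat, forall c, 1 <= c -> c + Z.of_nat k <= n -> p c <= p (c + Z.of_nat k)).
  { induction k; intros c H1 H2.
    - replace (c + Z.of_nat 0) with c by lia. lia.
    - specialize (IHk c H1 ltac:(lia)). specialize (p_adj (c + Z.of_nat k) ltac:(lia)).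
      replace (c + Z.of_nat (S k)) with (c + Z.of_nat k + 1) by lia. lia. }
  assert (p_mono : forall c d, 1 <= c <= d -> d <= n -> p c <= p d).
  { intros c d H1 H2. specialize (p_mono0 (Z.to_nat (d - c)) c ltac:(lia) ltac:(lia)).
    replace (c + Z.of_nat (Z.to_nat (d - c))) with d in p_mono0 by lia. auto. }
  assert (p_range : forall c, 1 <= c <= n -> a <= p c <= n).
  { intros c Hc. pose proof (bseq_in a n gN gE c ha Hc) as I. rewrite hp in I by auto.
    apply somes_in in I. rewrite hNE in I. apply in_zrange in I. auto. }
  destruct hWperm as [BW FW].
  assert (WInv : forall j, 0 <= j <= n-1 -> InvA a W (p (j+1) - 1) j).
  { intros j Hj x Hx.
    pose proof (p_range (j+1) ltac:(lia)).
    destruct (tri a n W x BW FW) as [[? E]|[[? Rx]|[? E]]]; try lia.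
    destruct (Z_le_gt_dec (W x) j) as [|Hgt]; auto. exfalso.
    destruct (Z.eq_dec (W x) 1) as [E1|E1].
    - assert (j = 0) by lia. subst j. simpl in Hx.
      destruct (Z_le_gt_dec x 1).
      + assert (Hpre : forall y, a <= y <= x -> W y <= 1).
        { intros y Hy. destruct (tri a n W y BW FW) as [[? E]|[[? Ry]|[? E]]]; try lia.
          destruct (Z_le_gt_dec (W y) 1); auto. exfalso.
          pose proof (hWP (W y) ltac:(lia)) as HH. apply (proj1 BW) in HH.
          pose proof (p_mono 1 (W y) ltac:(lia) ltac:(lia)). lia. }
        pose proof (hW1 x ltac:(lia)) as G. rewrite iota_prefix in G by (auto; lia).
        rewrite E1, hp in G by lia. injection G. lia.
      + pose proof (hW1 x ltac:(lia)) as G. unfold iota_r in G.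
        replace ((a <=? x) && (x <=? 1)) with false in G
          by (symmetry; apply andb_false_iff; right; apply Z.leb_gt; lia).
        rewrite hp in G by lia. injection G as G.
        pose proof (p_mono 1 x ltac:(lia) ltac:(lia)). lia.
    - pose proof (hWP (W x) ltac:(lia)) as HH. apply (proj1 BW) in HH.
      pose proof (p_mono (j+1) (W x) ltac:(lia) ltac:(lia)). lia. }
  destruct hC as [hU1 [hUn hstep]]. replace (n-1+1) with n in hUn by lia.
  assert (Claim0 : forall d : nat, forall i, i = n - Z.of_nat d -> 1 <= i ->
     Sperm a n (u i) /\ forall j, 0 <= j <= i -> j <= n-1 -> InvA a (u i) (p (j+1) - 1) j).
  { induction d; intros i Hi H1.
    - replace i with n by lia. rewrite hUn. split. split; auto. intros; apply WInv; lia.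
    - destruct (IHd (i+1) ltac:(lia) ltac:(lia)) as [S1 I1].
      destruct (hstep i ltac:(lia)) as [ts [Hp _]].
      destruct (kpath_back a n _ ts _ _ Hp S1) as [S0 [IB _]].
      split; auto. intros j Hj Hj'. apply IB.
      pose proof (p_mono (j+1) (i+1) ltac:(lia) ltac:(lia)). lia.
      apply I1; lia. }
  assert (Claim : forall i, 1 <= i <= n ->
     Sperm a n (u i) /\ forall j, 0 <= j <= i -> j <= n-1 -> InvA a (u i) (p (j+1) - 1) j).
  { intros i Hi. apply (Claim0 (Z.to_nat (n - i))); lia. }
  split; [|split].
  - intros i j x Hi Hj Hjn Hx. destruct (Claim i Hi) as [[Bi Fi] Ii].
    pose proof (Ii j Hj Hjn x Hx).
    destruct (tri a n (u i) x Bi Fi) as [[? E]|[[? Rx]|[? E]]]; lia.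
  - intros i x Hi E. destruct (Claim i Hi) as [[Bi Fi] Ii].
    destruct (tri a n (u i) x Bi Fi) as [[? E']|[[? Rx]|[? E']]]; try lia.
    destruct (Z_le_gt_dec (p i) x); auto. exfalso.
    pose proof (Ii (i-1) ltac:(lia) ltac:(lia) x) as HH. replace (i-1+1) with i in HH by lia.
    specialize (HH ltac:(lia)). lia.
  - intros i k x Hk Hi.
    assert (G : forall d : nat, forall k, k = 1 + Z.of_nat d -> k <= i -> (u k x = i <-> u 1 x = i)).
    { induction d; intros k' Hk' Hki.
      - replace k' with 1 by lia. tauto.
      - set (m := 1 + Z.of_nat d).
        rewrite <- (IHd m eq_refl ltac:(lia)).
        destruct (hstep m ltac:(lia)) as [ts [Hp _]].
        destruct (Claim (m+1) ltac:(lia)) as [S1 I1].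
        destruct (kpath_back a n _ ts _ _ Hp S1) as [_ [_ V]].
        replace k' with (m+1) by lia.
        symmetry. apply (V m); [apply I1; lia | lia]. }
    apply (G (Z.to_nat (k - 1))); lia.
Qed.
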